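(* Let $(X,\preceq,\{H_n\})$ be a half-space order such that $(X,\preceq)$ is globally hyperbolic with respect to a given topology on $X$. Let $H$ be a group acting effectively and unboundedly by quasi-automorphisms on $(X,\preceq,\{H_n\})$, and let $T_X:H\to\mathbb{R}$ be the associated translation number. Then for every subgroup $G<H$ the following are equivalent: (i) $T_X|_G\equiv 0$; (ii) every $G$-orbit in $X$ is bounded; (iii) there exists a bounded $G$-orbit in $X$.
   Context: A half-space filtration of $X$ is $\{H_n\}_{n\in\mathbb{Z}}$ with $H_{n+1}\subsetneq H_n$, $\bigcap H_n=\emptyset$, $\bigcup H_n=X$; height $h(a)=\sup\{n: a\in H_n\}$, $h(a,b)=h(a)-h(b)$. A half-space order $(X,\preceq,\{H_n\})$: $(X,\preceq)$ a poset, $\{H_n\}$ a half-space filtration and for a constant $w$, $h(a,b)\geq w\Rightarrow a\succeq b$. An action is by quasi-automorphisms if for some $d$, $|h(ga,gb)-h(a,b)|\leq d$ for all $g,a,b$; unbounded if for some $g,a$, $h(g^na)\to\pm\infty$ as $n\to\pm\infty$. The translation number is $T_X(g)=\lim_{n\to\infty}h(g^na,a)/n$ (independent of $a$). $(X,\preceq)$ is globally hyperbolic if the intervals $[x,y]=\{z:x\preceq z\preceq y\}$ are compact and the sets $[x,\infty)=\{z: x\preceq z\}$, $(-\infty,x]=\{z:z\preceq x\}$ are closed. A subset of $X$ is bounded if its closure is compact. *)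

(* Defs.v *)
From mathcomp Require Import all_boot all_order all_algebra.
From mathcomp Require Import all_classical all_reals all_analysis.
Set Implicit Arguments. Unset Strict Implicit. Unset Printing Implicit Defensive.
Import Order.TTheory GRing.Theory Num.Theory.
Import numFieldNormedType.Exports.
Local Open Scope classical_set_scope.
Local Open Scope ring_scope.

Definition half_space_filtration (X : Type) (Hs : int -> set X) : Prop :=
  [/\ (forall n : int, Hs (n + 1) `<` Hs n),
      \bigcap_(n in [set: int]) Hs n = set0 &
      \bigcup_(n in [set: int]) Hs n = [set: X]].

Definition height (R : realType) (X : Type) (Hs : int -> set X) (a : X) : R :=
  sup [set (n%:~R : R) | n in [set n : int | Hs n a]].

Definition rel_height (R : realType) (X : Type) (Hs : int -> set X) (a b : X) : R :=
  height R Hs a - height R Hs b.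

Definition is_partial_order (X : Type) (le : X -> X -> Prop) : Prop :=
  [/\ (forall x, le x x),
      (forall x y, le x y -> le y x -> x = y) &
      (forall x y z, le x y -> le y z -> le x z)].

Definition half_space_order (R : realType) (X : Type) (le : X -> X -> Prop)
    (Hs : int -> set X) : Prop :=
  [/\ is_partial_order le, half_space_filtration Hs &
      exists w : R, forall a b, rel_height R Hs a b >= w -> le b a].

Definition ointerval (X : Type) (le : X -> X -> Prop) (x y : X) : set X :=
  [set z | le x z /\ le z y].
Definition up_set (X : Type) (le : X -> X -> Prop) (x : X) : set X :=
  [set z | le x z].
Definition down_set (X : Type) (le : X -> X -> Prop) (x : X) : set X :=
  [set z | le z x].

Definition globally_hyperbolic (X : topologicalType) (le : X -> X -> Prop) : Prop :=
  forall x y : X, [/\ compact (ointerval le x y),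
                      closed (up_set le x) & closed (down_set le x)].

Definition hbounded (X : topologicalType) (A : set X) : Prop :=
  compact (closure A).

Definition is_action (G : groupType) (X : Type) (act : G -> X -> X) : Prop :=
  (forall x, act 1%g x = x) /\
  (forall (g h : G) x, act (g * h)%g x = act g (act h x)).

Definition effective (G : groupType) (X : Type) (act : G -> X -> X) : Prop :=
  forall g : G, (forall x, act g x = x) -> g = 1%g.

Definition by_quasi_automorphisms (R : realType) (G : groupType) (X : Type)
    (act : G -> X -> X) (Hs : int -> set X) : Prop :=
  exists d : R, forall (g : G) (a b : X),
    `| rel_height R Hs (act g a) (act g b) - rel_height R Hs a b | <= d.

(* unbounded: for some g, a, h(g^n a) -> +oo as n -> +oo and -> -oo as n -> -oo
   (g^(-n) = (g^-1)^n) *)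
Definition unbounded_action (R : realType) (G : groupType) (X : Type)
    (act : G -> X -> X) (Hs : int -> set X) : Prop :=
  exists (g : G) (a : X),
    (fun n : nat => height R Hs (act (monoid.natexp g n) a)) @ \oo --> +oo /\
    (fun n : nat => height R Hs (act (monoid.natexp (monoid.inv g) n) a)) @ \oo --> -oo.

Definition transl_number (R : realType) (G : groupType) (X : Type)
    (act : G -> X -> X) (Hs : int -> set X) (g : G) (a : X) : R :=
  limn (fun n : nat => rel_height R Hs (act (monoid.natexp g n) a) a / n%:R).

Definition is_subgroup (G : groupType) (S : set G) : Prop :=
  [/\ S 1%g, (forall x y, S x -> S y -> S (x * y)%g) &
      (forall x, S x -> S (monoid.inv x))].

Definition orbit_of (G : groupType) (X : Type) (act : G -> X -> X)
    (S : set G) (x : X) : set X :=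
  [set act g x | g in S].

(* Main.v *)
Require Import Defs.
From mathcomp Require Import all_boot all_order all_algebra.
From mathcomp Require Import all_classical all_reals all_analysis.
From mathcomp Require Import ring lra.
Import Order.TTheory GRing.Theory Num.Theory.
Import numFieldNormedType.Exports.
Local Open Scope classical_set_scope.
Local Open Scope ring_scope.


Section Heights.
Variables (R : realType) (X : Type) (Hs : int -> set X).
Hypothesis HF : half_space_filtration Hs.

Lemma Hs_dec {i j : int} : i <= j -> Hs j `<=` Hs i.
Proof.
move=> lij; have [k ->] : exists k : nat, j = i + k%:Z.
  by exists `|j - i|%N; rewrite gez0_abs ?subr_ge0 // addrCA subrr addr0.
elim: k => [|k IH]; first by rewrite addr0.
case: HF => Hp _ _.
have := Hp (i + k%:Z) => /properW sub.
have -> : i + k.+1%:Z = i + k%:Z + 1 by rewrite -addrA -addn1 PoszD.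
exact: subset_trans sub IH.
Qed.

Lemma height_char (n : int) (z : X) : Hs n z -> ~ Hs (n + 1) z ->
  height R Hs z = n%:~R.
Proof.
move=> Hn Hn1; rewrite /height.
have ub : ubound [set (m%:~R : R) | m in [set m : int | Hs m z]] (n%:~R).
  move=> _ [m /= Hm <-]; rewrite ler_int; case: (leP m n) => // lt.
  exfalso; apply: Hn1; move: lt; rewrite -lezD1 => lt.
  exact: (Hs_dec lt _ Hm).
apply/le_anti/andP; split.
  by apply: ge_sup => //; exists n%:~R; exists n.
by apply: ub_le_sup; [exists n%:~R | exists n].
Qed.

Lemma height_ex (z : X) : exists n : int, Hs n z /\ ~ Hs (n + 1) z.
Proof.
case: HF => _ Hcap Hcup.
have : [set: X] z by [].
rewrite -Hcup => -[m _ Hm].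
have : ~ (\bigcap_(n in [set: int]) Hs n) z by rewrite Hcap.
move=> /existsNP [k]; move/not_implyP => [_ Hk].
have lt : m < k.
  case: (ltP m k) => // le; exfalso; exact/Hk/(Hs_dec le).
have [t et] : exists t : nat, m + t%:Z = k.
  by exists `|k - m|%N; rewrite gez0_abs ?subr_ge0 ?ltW // addrCA subrr addr0.
elim: t m Hm {lt} et => [|t IH] m Hm et.
  by exfalso; apply: Hk; rewrite -et addr0.
have [H1|H1] := pselect (Hs (m + 1) z); last by exists m.
apply: (IH (m + 1)) => //; rewrite -et -addrA; by congr (_ + _); rewrite -addn1 PoszD addrC.
Qed.

Lemma height_int (z : X) : exists n : int, height R Hs z = n%:~R.
Proof. by have [n [a b]] := height_ex z; exists n; apply: height_char. Qed.

Lemma height_point (n : int) : exists z : X, height R Hs z = n%:~R.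
Proof.
case: HF => Hp _ _; have [_ ] := Hp n.
move=> /existsNP [z] /not_implyP [a b]; exists z.
by apply: height_char.
Qed.
End Heights.


Section QM.
Variables (R : realType) (a : nat -> R) (d : R).
Hypothesis qa : forall m n, `|a (m + n) - a m - a n| <= d.

Lemma d_ge0 : 0 <= d.
Proof. exact: le_trans (normr_ge0 _) (qa 0 0). Qed.

Lemma qm_mult k n : `|a (k.+1 * n) - k.+1%:R * a n| <= k%:R * d.
Proof.
elim: k => [|k IH]; first by rewrite mul1n mul1r subrr normr0 mul0r.
have := qa n (k.+1 * n); rewrite -mulSn => h.
have e : a (k.+2 * n) - k.+2%:R * a n
   = (a (k.+2 * n) - a n - a (k.+1 * n)) + (a (k.+1 * n) - k.+1%:R * a n).
  by rewrite -(addn1 k.+1) natrD mulrDl mul1r; ring.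
rewrite e; apply: le_trans (ler_normD _ _) _.
have -> : k.+1%:R * d = d + k%:R * d by rewrite -addn1 natrD; ring.
exact: lerD.
Qed.

Definition bq (n : nat) : R := a n / n%:R.

Lemma bq_mult k n : (0 < n)%N -> `|bq (k.+1 * n) - bq n| <= d / n%:R.
Proof.
move=> n0; have npos : 0 < n%:R :> R by rewrite ltr0n.
have kpos : 0 < k.+1%:R :> R by rewrite ltr0n.
rewrite /bq natrM.
have e : a (k.+1 * n) / (k.+1%:R * n%:R) - a n / n%:R
   = (a (k.+1 * n) - k.+1%:R * a n) / (k.+1%:R * n%:R).
  by field; rewrite ?gt_eqF.
rewrite e normrM normfV (ger0_norm (ltW (mulr_gt0 kpos npos))) -/(_ / _).
rewrite ler_pdivrMr ?mulr_gt0 //.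
apply: le_trans (qm_mult k n) _.
have -> : d / n%:R * (k.+1%:R * n%:R) = k.+1%:R * d by field; rewrite gt_eqF.
by rewrite ler_wpM2r ?d_ge0 // ler_nat.
Qed.

Lemma bq_close N M : (0 < N)%N -> (0 < M)%N ->
  `|bq N - bq M| <= d / N%:R + d / M%:R.
Proof.
move=> N0 M0.
have h1 := bq_mult M.-1 N N0; rewrite prednK // in h1.
have h2 := bq_mult N.-1 M M0; rewrite prednK // mulnC in h2.
have -> : bq N - bq M = - (bq (M * N) - bq N) + (bq (M * N) - bq M) by ring.
apply: le_trans (ler_normD _ _) _.
by rewrite normrN lerD.
Qed.

Lemma bq_cvg : cvg (bq @ \oo).
Proof.
apply/cauchy_cvgP/cauchy_exP => e e0.
pose M := (Num.trunc (4 * d / e)).+1.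
have M0 : (0 < M)%N by [].
have hM : 4 * d / e < M%:R by apply: truncnS_gt.
exists (bq M); exists M => // N /= MN.
have N0 : (0 < N)%N by apply: leq_trans MN.
rewrite -ball_normE /ball_ /=.
apply: le_lt_trans (bq_close M N M0 N0) _.
have Mpos : 0 < M%:R :> R by rewrite ltr0n.
have dM : d / N%:R <= d / M%:R.
  by rewrite ler_wpM2l ?d_ge0 // lef_pV2 ?posrE ?ltr0n // ler_nat.
apply: le_lt_trans (lerD (lexx _) dM) _.
have d0 := d_ge0.
rewrite ltr_pdivrMr // in hM.
have : d / M%:R < e / 2.
  rewrite ltr_pdivrMr //; nra.
lra.
Qed.

Lemma bq_lim : `|limn bq - a 1| <= d.
Proof.
have hb : forall N, (0 < N)%N -> `|bq N - a 1| <= d.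
  move=> N N0; have := qm_mult N.-1 1; rewrite muln1 prednK // => h.
  have Npos : 0 < N%:R :> R by rewrite ltr0n.
  have -> : bq N - a 1 = (a N - N%:R * a 1) / N%:R by rewrite /bq; field; rewrite gt_eqF.
  rewrite normrM normfV (ger0_norm (ltW Npos)) -/(_ / _) ler_pdivrMr //.
  apply: le_trans h _; rewrite [d * _]mulrC ler_wpM2r ?d_ge0 //.
  by rewrite -(prednK N0) ler_nat.
rewrite ler_norml; apply/andP; split.
  rewrite lerBrDr; apply: limr_ge; first exact: bq_cvg.
  exists 1%N => // N /= N0; have := hb N N0; rewrite ler_norml => /andP[h _].
  lra.
rewrite lerBlDr; apply: limr_le; first exact: bq_cvg.
exists 1%N => // N /= N0; have := hb N N0; rewrite ler_norml => /andP[_ h].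
lra.
Qed.
End QM.

Lemma bounded_div_cvg0 (R : realType) (c : nat -> R) (B : R) :
  (forall n, `|c n| <= B) -> (fun n => c n / n%:R) @ \oo --> 0.
Proof.
move=> hB; apply/cvgrPdist_lt => e e0.
have B0 : 0 <= B by apply: le_trans (hB 0%N).
pose N := (Num.trunc (B / e)).+1.
have hN : B / e < N%:R by apply: truncnS_gt.
rewrite ltr_pdivrMr // in hN.
exists N => // n /= Nn.
have n0 : (0 < n)%N by apply: leq_trans Nn.
have npos : 0 < n%:R :> R by rewrite ltr0n.
have nN : N%:R <= n%:R :> R by rewrite ler_nat.
rewrite sub0r normrN normrM normfV (ger0_norm (ltW npos)) -/(_ / _).
rewrite ltr_pdivrMr //.
have := hB n; nra.
Qed.


Lemma int_above {R : realType} (x : R) : exists m : int, x <= m%:~R.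
Proof.
exists (Posz (Num.trunc `|x|).+1); rewrite -pmulrn.
apply: le_trans (ler_norm x) _; apply: ltW; exact: truncnS_gt.
Qed.

Lemma seq_ub (s : seq int) : exists N : int, forall i, i \in s -> i <= N.
Proof.
elim: s => [|j s [N hN]]; first by exists 0.
exists (Num.max j N) => i; rewrite inE => /orP[/eqP ->|/hN h].
  by rewrite le_max lexx.
by rewrite le_max h orbT.
Qed.

Lemma compact_ub (R : realType) (X : topologicalType) (le : X -> X -> Prop)
   (ht : X -> R) (p : int -> X) (w : R) :
  is_partial_order le -> (forall a b, ht a - ht b >= w -> le b a) ->
  (forall n, ht (p n) = n%:~R) -> (forall x, closed [set z | le x z]) ->
  forall K, compact K -> exists M : R, forall z, K z -> ht z <= M.
Proof.
move=> [_ anti trans] hw hp hcl K cK.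
have ex : forall z, exists n, ~ le (p n) z.
  move=> z; apply/existsNP => hall.
  have [m hm] := int_above (ht z + w).
  have [k hk] := int_above (Num.max w 1).
  have k1 : 1 <= k%:~R :> R by apply: le_trans hk; rewrite le_max lexx orbT.
  have l1 : le z (p m) by apply: hw; rewrite hp; lra.
  have l2 : le (p m) (p (m + k)).
    apply: hw; rewrite !hp rmorphD /=.
    have : w <= k%:~R by apply: le_trans hk; rewrite le_max lexx.
    lra.
  have e := anti _ _ l2 (trans _ _ _ (hall (m + k)) l1).
  have := congr1 ht e; rewrite !hp rmorphD /=; lra.
move/compact_near_coveringP: cK => cK.
have loc : forall x, K x ->
    \forall x' \near x & i \near \oo, ht x' < (i%:R : R) + w.
  move=> x Kx; have [n hn] := ex x.
  near=> x' i => /=.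
  have h1 : ~ le (p n) x'.
    near: x'; apply: open_nbhs_nbhs; split => //; exact: (closed_openC (hcl (p n))).
  have h2 : (`|n| <= i)%N by near: i; exists `|n|%N.
  have : ht x' - ht (p n) < w by rewrite ltNge; apply/negP => /hw.
  rewrite hp => h.
  have hi : n <= i%:Z by apply: le_trans (lez_abs n) _; rewrite lez_nat.
  have : n%:~R <= (i%:Z)%:~R :> R by rewrite ler_int.
  rewrite -pmulrn.
  lra.
have [N _ hN] := cK nat \oo (fun i x => ht x < i%:R + w) _ loc.
exists (N%:R + w) => z Kz; apply: ltW; exact: (hN N (leqnn N) z Kz).
Unshelve. all: by end_near.
Qed.

Theorem theorem2p7 (R : realType) (X : topologicalType) (le : X -> X -> Prop)
    (Hs : int -> set X) (H : groupType) (act : H -> X -> X) :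
  half_space_order R le Hs ->
  globally_hyperbolic le ->
  is_action act -> effective act ->
  by_quasi_automorphisms R act Hs ->
  unbounded_action R act Hs ->
  forall G : set H, is_subgroup G ->
    [/\ ((forall g, G g -> forall a : X, transl_number R act Hs g a = 0) ->
           (forall x : X, hbounded (orbit_of act G x))),
        ((forall x : X, hbounded (orbit_of act G x)) ->
           (exists x : X, hbounded (orbit_of act G x))) &
        ((exists x : X, hbounded (orbit_of act G x)) ->
           (forall g, G g -> forall a : X, transl_number R act Hs g a = 0))].
Proof.
move=> [po HF [w hw]] GH [act1 actM] _ [d hd] [g0 [x0 _]] G [G1 GM GV].
have [refl anti trans] := po.
have [p hp] : {p : int -> X & forall n, height R Hs (p n) = n%:~R}.
  exact: (boolp.choice (fun n => @height_point R X Hs HF n)).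
have hw' : forall a b, w <= height R Hs a - height R Hs b -> le b a := hw.
have ub : forall K, compact K -> exists M, forall z, K z -> height R Hs z <= M.
  move=> K cK; apply: (@compact_ub R X le (height R Hs) p w po hw' hp _ K cK).
  by move=> x; have [_ c _] := GH x x.
have lb : forall K, compact K -> exists M, forall z, K z -> - height R Hs z <= M.
  move=> K cK.
  apply: (@compact_ub R X (fun a b => le b a) (fun z => - height R Hs z)
     (fun n => p (- n)) w _ _ _ _ K cK).
  - split => //; [by move=> x y a b; apply: anti | by move=> x y z a b; apply: trans b a].
  - move=> a b h; apply: hw'; lra.
  - by move=> n /=; rewrite hp rmorphN opprK.
  - by move=> x; have [_ _ c] := GH x x.
have actX : forall g m n x, act (monoid.natexp g (m + n)) x
    = act (monoid.natexp g m) (act (monoid.natexp g n) x).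
  by move=> g m n x; rewrite monoid.expgnDr actM.
have GX : forall g n, G g -> G (monoid.natexp g n).
  move=> g n Gg; elim: n => [|n IH]; first by rewrite monoid.expg0.
  by rewrite monoid.expgS; apply: GM.
have hd' : forall g a b, `|(height R Hs (act g a) - height R Hs (act g b))
     - (height R Hs a - height R Hs b)| <= d := hd.
have ab : forall r : R, r <= `|r| /\ - r <= `|r|.
  by move=> r; split; [exact: ler_norm | rewrite -normrN; exact: ler_norm].
split.
- move=> T0 x.
  have hg : forall g, G g -> `|height R Hs (act g x) - height R Hs x| <= d.
    move=> g Gg.
    pose a n := height R Hs (act (monoid.natexp g n) x) - height R Hs x.
    have qa : forall m n, `|a (m + n)%N - a m - a n| <= d.
      move=> m n; rewrite /a actX.
      have E : forall u v s t : R, (u - t) - (v - t) - (s - t) = (u - v) - (s - t).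
        by move=> *; ring.
      rewrite E; exact: hd'.
    have := @bq_lim R a d qa.
    have -> : limn (bq R a) = 0 by exact: T0 g Gg x.
    by rewrite /a sub0r normrN.
  have [lo hlo] := int_above (- (height R Hs x - d - w)).
  have [hi hhi] := int_above (height R Hs x + d + w).
  have sub : orbit_of act G x `<=` ointerval le (p (- lo)) (p hi).
    move=> _ [g Gg <-]; have := hg g Gg; rewrite ler_norml => /andP[h1 h2]; split.
    + apply: hw'; rewrite hp rmorphN /=; lra.
    + apply: hw'; rewrite hp; lra.
  have cI : closed (ointerval le (p (- lo)) (p hi)).
    have [_ c1 _] := GH (p (-lo)) (p hi); have [_ _ c2] := GH (p hi) (p hi).
    have -> : ointerval le (p (-lo)) (p hi)
        = up_set le (p (-lo)) `&` down_set le (p hi) by [].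
    exact: closedI.
  have [cpt _ _] := GH (p (-lo)) (p hi).
  apply: (subclosed_compact _ cpt).
  + exact: closed_closure.
  + move=> z /(closure_subset sub); exact: cI.
- by move=> hb; exists x0; exact: hb.
- move=> [x cK] g Gg a.
  have [U hU] := ub _ cK; have [L hL] := lb _ cK.
  have inK : forall n, closure (orbit_of act G x) (act (monoid.natexp g n) x).
    move=> n; apply: subset_closure; exists (monoid.natexp g n) => //; exact: GX.
  apply: cvg_lim => //.
  apply: (@bounded_div_cvg0 R _
     (d + `|height R Hs a| + `|height R Hs x| + `|U| + `|L|)) => n.
  have h1 := hU _ (inK n); have h2 := hL _ (inK n).
  have := hd' (monoid.natexp g n) a x; rewrite /rel_height !ler_norml => /andP [h3 h4].
  have [a1 a2] := ab (height R Hs a); have [a3 a4] := ab (height R Hs x).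
  have [a5 a6] := ab U; have [a7 a8] := ab L.
  apply/andP; split; lra.
Qed.
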